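(* Assume $(\boldsymbol\Sigma,\sigma)$ is a primitive Markov subshift on a countable alphabet, with associated set $\mathbb F$. Let $A:\boldsymbol\Sigma\to\mathbb R$ be a bounded above and locally H\''older continuous potential such that $\inf A|_{\bigcup_{i\in\mathbb F}[i]}>-\infty$. Then there exists a unique minimal, nonnegative, bounded and locally H\''older continuous function $u_A:\boldsymbol\Sigma\to\mathbb R_+$ satisfying $$A+u_A-u_A\circ\sigma\le\beta_A ,$$ where minimality means: for every nonnegative continuous sub-action $u:\boldsymbol\Sigma\to\mathbb R_+$ (not necessarily locally H\''older continuous) one has $u_A\le u$.
   Context: Let $\mathbf M:\mathbb Z_+\times\mathbb Z_+\to\{0,1\}$ be a transition matrix. Put $\mathcal B_0=\{i:\mathbf M(i,j)=1\text{ for some }j\}$, $\mathcal B_n=\{i:\mathbf M(i,j)=1\text{ for some }j\in\mathcal B_{n-1}\}$. $\mathbf M$ is primitive if there exist $\mathbb F\subseteq\mathbb Z_+$ and an integer $K_0\ge0$ such that for all $i,j\in\bigcap_{n\ge0}\mathcal B_n$ there are $\ell_1,\dots,\ell_{K_0}\in\mathbb F$ with $\mathbf M(i,\ell_1)\mathbf M(\ell_1,\ell_2)\cdots\mathbf M(\ell_{K_0},j)=1$. $\boldsymbol\Sigma=\{\mathbf x\in\mathbb Z_+^{\mathbb Z_+}:\mathbf M(x_j,x_{j+1})=1\ \forall j\}$ with metric $d(\mathbf x,\mathbf y)=\lambda^{\min\{j:x_j\neq y_j\}}$, $\lambda\in(0,1)$ fixed; $\sigma$ the left shift; $[i]=\{\mathbf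 x:x_0=i\}$. $\mathcal M_\sigma$ = $\sigma$-invariant Borel probabilities; $\beta_A=\sup_{\mu\in\mathcal M_\sigma}\int A\,d\mu$. $\mathrm{Var}_k(A)=\sup\{A(\mathbf x)-A(\mathbf y):d(\mathbf x,\mathbf y)\le\lambda^k\}$; $A$ is locally H\''older continuous if there is $H_A>0$ with $\mathrm{Var}_k(A)\le H_A\lambda^k$ for all $k\ge1$. A sub-action for $A$ is a continuous $u:\boldsymbol\Sigma\to\mathbb R$ with $A+u-u\circ\sigma\le\beta_A$ everywhere. *)

(* Defs.v *)
From Stdlib Require Import Reals Lra Lia Classical.
Open Scope R_scope.

(* Transition matrix on the countable alphabet Z_+ (modelled by nat). *)
Definition TM := nat -> nat -> bool.

Fixpoint Bset (M : TM) (n : nat) (i : nat) : Prop :=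
  match n with
  | O => exists j, M i j = true
  | S n' => exists j, Bset M n' j /\ M i j = true
  end.

Definition Binf (M : TM) (i : nat) : Prop := forall n, Bset M n i.

(* M is primitive with associated set F and integer K0:
   for all i, j in the intersection of the B_n there are l_1..l_K0 in F
   with M(i,l_1) M(l_1,l_2) ... M(l_K0,j) = 1  (encoded as a path
   l 0 = i, l 1, ..., l K0, l (K0+1) = j). *)
Definition primitive_with (M : TM) (F : nat -> Prop) (K0 : nat) : Prop :=
  forall i j, Binf M i -> Binf M j ->
    exists l : nat -> nat,
      l O = i /\ l (S K0) = j /\
      (forall m, (m <= K0)%nat -> M (l m) (l (S m)) = true) /\
      (forall m, (1 <= m)%nat -> (m <= K0)%nat -> F (l m)).

Record Sigma (M : TM) := mkSigma {
  seqS :> nat -> nat;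
  admS : forall j, M (seqS j) (seqS (S j)) = true }.
Arguments seqS {M}.
Arguments admS {M}.

Definition shift {M : TM} (x : Sigma M) : Sigma M :=
  mkSigma M (fun j => x (S j)) (fun j => admS x (S j)).

(* d(x,y) <= lam^k  iff  x_j = y_j for all j < k  (since 0 < lam < 1) *)
Definition agree {M : TM} (k : nat) (x y : Sigma M) : Prop :=
  forall j, (j < k)%nat -> x j = y j.

Definition locally_holder {M : TM} (lam : R) (A : Sigma M -> R) : Prop :=
  exists H, 0 < H /\
    forall k, (1 <= k)%nat -> forall x y, agree k x y -> A x - A y <= H * lam ^ k.

Definition continuous_S {M : TM} (u : Sigma M -> R) : Prop :=
  forall x eps, 0 < eps -> exists k, forall y, agree k x y -> Rabs (u y - u x) < eps.

Definition is_open {M : TM} (U : Sigma M -> Prop) : Prop :=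
  forall x, U x -> exists k, forall y, agree k x y -> U y.

Inductive borel (M : TM) : (Sigma M -> Prop) -> Prop :=
| borel_open : forall U, is_open U -> borel M U
| borel_compl : forall E, borel M E -> borel M (fun x => ~ E x)
| borel_union : forall E : nat -> Sigma M -> Prop,
    (forall n, borel M (E n)) -> borel M (fun x => exists n, E n x).

(* Borel probability measures (values on non-Borel sets are irrelevant) *)
Definition is_prob_measure {M : TM} (mu : (Sigma M -> Prop) -> R) : Prop :=
  (forall E, borel M E -> 0 <= mu E) /\
  mu (fun _ => True) = 1 /\
  (forall E : nat -> Sigma M -> Prop,
     (forall n, borel M (E n)) ->
     (forall n m, n <> m -> forall x, E n x -> E m x -> False) ->
     infinite_sum (fun n => mu (E n)) (mu (fun x => exists n, E n x))).

Definition is_invariant {M : TM} (mu : (Sigma M -> Prop) -> R) : Prop :=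
  forall E, borel M E -> mu (fun x => E (shift x)) = mu E.

Definition lower_sum {M : TM} (mu : (Sigma M -> Prop) -> R) (g : Sigma M -> R)
  (s : R) : Prop :=
  exists (n : nat) (a : nat -> R) (E : nat -> Sigma M -> Prop),
    (forall i, (i <= n)%nat ->
       borel M (E i) /\ 0 <= a i /\ (forall x, E i x -> a i <= g x)) /\
    (forall i j, (i <= n)%nat -> (j <= n)%nat -> i <> j ->
       forall x, E i x -> E j x -> False) /\
    s = sum_f_R0 (fun i => a i * mu (E i)) n.

(* Lebesgue integral of a nonnegative function, when finite *)
Definition integral_nonneg {M : TM} (mu : (Sigma M -> Prop) -> R)
  (g : Sigma M -> R) (I : R) : Prop := is_lub (lower_sum mu g) I.

Definition measurable {M : TM} (f : Sigma M -> R) : Prop :=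
  forall a, borel M (fun x => f x <= a).

Definition integral {M : TM} (mu : (Sigma M -> Prop) -> R) (f : Sigma M -> R)
  (r : R) : Prop :=
  measurable f /\
  exists Ip In,
    integral_nonneg mu (fun x => Rmax (f x) 0) Ip /\
    integral_nonneg mu (fun x => Rmax (- f x) 0) In /\
    r = Ip - In.

(* { int A dmu : mu in M_sigma }  (measures with int A dmu = -oo omitted:
   they do not affect the supremum) *)
Definition BetaSet {M : TM} (A : Sigma M -> R) (r : R) : Prop :=
  exists mu, is_prob_measure mu /\ is_invariant mu /\ integral mu A r.

(* t <= beta_A = sup BetaSet (supremum in the extended reals):
   t is below every upper bound of BetaSet. *)
Definition le_beta {M : TM} (A : Sigma M -> R) (t : R) : Prop :=
  forall b, is_upper_bound (BetaSet A) b -> t <= b.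

Definition sub_action {M : TM} (A : Sigma M -> R) (u : Sigma M -> R) : Prop :=
  continuous_S u /\ forall x, le_beta A (A x + u x - u (shift x)).

(* Main.v *)
Require Import Defs.
From Stdlib Require Import Reals Lra Lia Classical ClassicalEpsilon FunctionalExtensionality PropExtensionality ProofIrrelevance.
Open Scope R_scope.


Fixpoint fsum (n : nat) (f : nat -> R) : R :=
  match n with O => 0 | S n' => fsum n' f + f n' end.

Lemma fsum_ext n f g : (forall i, (i < n)%nat -> f i = g i) -> fsum n f = fsum n g.
Proof. induction n; simpl; intros H; auto. rewrite IHn by (intros; apply H; lia). rewrite H by lia. auto. Qed.

Lemma fsum_plus n f g : fsum n (fun i => f i + g i) = fsum n f + fsum n g.
Proof. induction n; simpl; [lra|]. rewrite IHn; lra. Qed.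

Lemma fsum_minus n f g : fsum n (fun i => f i - g i) = fsum n f - fsum n g.
Proof. induction n; simpl; [lra|]. rewrite IHn; lra. Qed.

Lemma fsum_scal n c f : fsum n (fun i => c * f i) = c * fsum n f.
Proof. induction n; simpl; [lra|]. rewrite IHn; lra. Qed.

Lemma fsum_const n c : fsum n (fun _ => c) = INR n * c.
Proof. induction n; simpl fsum; [simpl; lra|]. rewrite IHn, S_INR; lra. Qed.

Lemma fsum_le n f g : (forall i, (i < n)%nat -> f i <= g i) -> fsum n f <= fsum n g.
Proof. induction n; simpl; intros H; [lra|]. assert (f n <= g n) by (apply H; lia).
  assert (fsum n f <= fsum n g) by (apply IHn; intros; apply H; lia). lra. Qed.

Lemma fsum_exch n m (f : nat -> nat -> R) :
  fsum n (fun i => fsum m (fun j => f i j)) = fsum m (fun j => fsum n (fun i => f i j)).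
Proof. induction n; simpl.
  - induction m; simpl; lra.
  - rewrite IHn, <- fsum_plus. reflexivity. Qed.

Lemma sum_f_R0_fsum f n : sum_f_R0 f n = fsum (S n) f.
Proof. induction n; simpl; [lra|]. simpl in IHn. rewrite IHn. reflexivity. Qed.

Lemma fsum_shift p f : fsum p (fun k => f (S k)) = fsum p f - f 0%nat + f p.
Proof. induction p; simpl; [lra|]. rewrite IHp. lra. Qed.

Lemma fsum_add n K f : fsum (n + K) f = fsum n f + fsum K (fun k => f (n + k)%nat).
Proof. induction K; simpl. rewrite Nat.add_0_r; lra. rewrite Nat.add_succ_r. simpl. rewrite IHK. lra. Qed.

Definition indR (P : Prop) : R := if excluded_middle_informative P then 1 else 0.

Lemma indR_nonneg P : 0 <= indR P.
Proof. unfold indR; destruct excluded_middle_informative; lra. Qed.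
Lemma indR_true (P : Prop) : P -> indR P = 1.
Proof. unfold indR; destruct excluded_middle_informative; tauto. Qed.
Lemma indR_false (P : Prop) : ~ P -> indR P = 0.
Proof. unfold indR; destruct excluded_middle_informative; tauto. Qed.

Lemma fsum_indR_none n f (Q : nat -> Prop) : (forall i, (i < n)%nat -> ~ Q i) ->
  fsum n (fun i => f i * indR (Q i)) = 0.
Proof. induction n; simpl; intros H; [lra|]. rewrite IHn by (intros; apply H; lia).
  rewrite indR_false by (apply H; lia). lra. Qed.

Lemma fsum_indR_one n f (Q : nat -> Prop) i0 : (i0 < n)%nat -> Q i0 ->
  (forall i, (i < n)%nat -> Q i -> i = i0) ->
  fsum n (fun i => f i * indR (Q i)) = f i0.
Proof. induction n; simpl; intros Hi Hq Hu; [lia|].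
  destruct (Nat.eq_dec i0 n).
  - subst. rewrite fsum_indR_none. rewrite indR_true by auto. lra.
    intros i Hi' Hq'. specialize (Hu i ltac:(lia) Hq'). lia.
  - rewrite IHn by (auto; try lia; intros; apply Hu; auto; lia).
    rewrite indR_false. lra. intro Hq'. specialize (Hu n ltac:(lia) Hq'). lia. Qed.

Lemma first_index (P : nat -> Prop) k : P k ->
  exists i, (i <= k)%nat /\ P i /\ forall j, (j < i)%nat -> ~ P j.
Proof.
  assert (H : forall n k, (k <= n)%nat -> P k -> exists i, (i <= k)%nat /\ P i /\ forall j, (j < i)%nat -> ~ P j).
  { induction n; intros k0 Hk Hp.
    - exists 0%nat. split; [lia|]. split. replace 0%nat with k0 by lia. auto. intros; lia.
    - destruct (classic (exists j, (j < k0)%nat /\ P j)) as [[j [Hj Pj]]|Hn].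
      + destruct (IHn j ltac:(lia) Pj) as [i [Hi [Pi Hm]]]. exists i. split; [lia|]. auto.
      + exists k0. split; [lia|]. split; auto. intros j Hj Pj. apply Hn. eauto. }
  intros; eapply H; eauto. Qed.

Lemma inf_sum_plus f g l1 l2 : infinite_sum f l1 -> infinite_sum g l2 ->
  infinite_sum (fun n => f n + g n) (l1 + l2).
Proof. intros H1 H2. pose proof (CV_plus _ _ _ _ H1 H2) as H. intros eps He.
  destruct (H eps He) as [N HN]. exists N. intros n Hn. specialize (HN n Hn).
  rewrite sum_plus. exact HN. Qed.

Lemma inf_sum_scal f l c : infinite_sum f l -> infinite_sum (fun n => c * f n) (c * l).
Proof. intros H eps He. destruct (Req_dec c 0).
  - subst. exists 0%nat. intros n _. rewrite sum_f_R0_fsum.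
    rewrite fsum_scal. unfold Rdist. rewrite Rmult_0_l, Rmult_0_l, Rminus_0_r, Rabs_R0. lra.
  - destruct (H (eps / Rabs c)) as [N HN]. apply Rdiv_lt_0_compat; [lra| apply Rabs_pos_lt; auto].
    exists N. intros n Hn. specialize (HN n Hn). rewrite sum_f_R0_fsum, fsum_scal.
    rewrite <- sum_f_R0_fsum. unfold Rdist in *.
    replace (c * sum_f_R0 f n - c * l) with (c * (sum_f_R0 f n - l)) by ring.
    rewrite Rabs_mult. pose proof (Rabs_pos_lt c H0).
    apply Rmult_lt_compat_l with (r := Rabs c) in HN; auto.
    replace (Rabs c * (eps / Rabs c)) with eps in HN by (field; lra). lra. Qed.

Lemma inf_sum_fsum p (f : nat -> nat -> R) (l : nat -> R) :
  (forall k, (k < p)%nat -> infinite_sum (fun n => f n k) (l k)) ->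
  infinite_sum (fun n => fsum p (f n)) (fsum p l).
Proof. induction p; simpl; intros H.
  - intros eps He. exists 0%nat. intros n _. rewrite sum_f_R0_fsum.
    replace (fsum (S n) (fun _ => 0)) with 0. unfold Rdist. rewrite Rminus_0_r, Rabs_R0; lra.
    rewrite fsum_const. lra.
  - apply inf_sum_plus. apply IHp; intros; apply H; lia. apply H; lia. Qed.

Lemma sig_ext {M : TM} (x y : Sigma M) : (forall j, x j = y j) -> x = y.
Proof. destruct x as [x hx], y as [y hy]; simpl; intros H.
  assert (x = y) by (apply functional_extensionality; auto). subst.
  f_equal. apply proof_irrelevance. Qed.

Fixpoint iterS {M : TM} (n : nat) (x : Sigma M) : Sigma M :=
  match n with O => x | S n' => shift (iterS n' x) end.

Lemma iterS_app {M : TM} n (x : Sigma M) j : iterS n x j = x (n + j)%nat.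
Proof. revert j; induction n; intros j; simpl; auto. rewrite IHn. f_equal. lia. Qed.

Lemma holder_cont {M : TM} lam (u : Sigma M -> R) : 0 < lam < 1 -> locally_holder lam u -> continuous_S u.
Proof. intros Hl [H [HH Hu]] x eps He.
  destruct (pow_lt_1_zero lam ltac:(rewrite Rabs_right; lra) (eps / H)) as [N HN].
  apply Rdiv_lt_0_compat; lra.
  exists (S N). intros y Hy. specialize (HN (S N) ltac:(lia)).
  rewrite Rabs_right in HN by (apply Rle_ge, pow_le; lra).
  assert (h1 := Hu (S N) ltac:(lia) x y Hy).
  assert (h2 := Hu (S N) ltac:(lia) y x ltac:(intros j Hj; symmetry; apply Hy; auto)).
  assert (H * lam ^ S N < eps).
  { apply Rmult_lt_compat_l with (r := H) in HN; auto.
    replace (H * (eps / H)) with eps in HN by (field; lra). lra. }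
  apply Rabs_def1; lra. Qed.

Lemma borel_ext {M : TM} (P Q : Sigma M -> Prop) : (forall x, P x <-> Q x) -> borel M P -> borel M Q.
Proof. intros H B. assert (P = Q) as -> by (apply functional_extensionality; intros; apply propositional_extensionality; auto). auto. Qed.

Lemma borel_true {M : TM} : borel M (fun _ => True).
Proof. apply borel_open. intros x _. exists 0%nat. auto. Qed.

Lemma borel_or {M : TM} (P Q : Sigma M -> Prop) : borel M P -> borel M Q -> borel M (fun x => P x \/ Q x).
Proof. intros HP HQ.
  apply borel_ext with (P := fun x => exists n, (match n with O => P | _ => Q end) x).
  - intros x; split. intros [[|n] h]; auto. intros [h|h]. exists 0%nat; auto. exists 1%nat; auto.
  - apply borel_union. intros [|n]; auto. Qed.

Lemma borel_and {M : TM} (P Q : Sigma M -> Prop) : borel M P -> borel M Q -> borel M (fun x => P x /\ Q x).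
Proof. intros HP HQ.
  apply borel_ext with (P := fun x => ~ ((fun y => ~ P y) x \/ (fun y => ~ Q y) x)).
  - intros x; simpl; split. intros h; split; apply NNPP; tauto. tauto.
  - apply borel_compl, borel_or; apply borel_compl; auto. Qed.

Lemma borel_neq {M : TM} (w : Sigma M) : borel M (fun x => x <> w).
Proof. apply borel_open. intros x Hx.
  destruct (classic (exists j, x j <> w j)) as [[j Hj]|Hn].
  - exists (S j). intros y Hy Hyw. subst. apply Hj. apply Hy. lia.
  - exfalso. apply Hx, sig_ext. intros j. apply NNPP. eauto. Qed.

Lemma borel_eq {M : TM} (w : Sigma M) : borel M (fun x => x = w).
Proof. apply borel_ext with (P := fun x => ~ (fun y => y <> w) x).
  intros x; simpl; split; intros; [apply NNPP|]; tauto.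
  apply borel_compl, borel_neq. Qed.

Lemma meas_cont {M : TM} (A : Sigma M -> R) : continuous_S A -> measurable A.
Proof. intros HA a.
  apply borel_ext with (P := fun x => ~ (fun y => a < A y) x).
  intros x; simpl; split; intros; lra.
  apply borel_compl, borel_open. intros x Hx.
  destruct (HA x (A x - a) ltac:(lra)) as [k Hk]. exists k. intros y Hy.
  specialize (Hk y Hy). apply Rabs_def2 in Hk. lra. Qed.

Definition pmu {M : TM} (p : nat) (z : Sigma M) (E : Sigma M -> Prop) : R :=
  / INR p * fsum p (fun k => indR (E (iterS k z))).

Lemma inf_sum_ind {M : TM} (E : nat -> Sigma M -> Prop) w :
  (forall n m, n <> m -> forall x, E n x -> E m x -> False) ->
  infinite_sum (fun n => indR (E n w)) (indR (exists n, E n w)).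
Proof. intros Hd eps He.
  destruct (classic (exists n, E n w)) as [[n0 H0]|Hn].
  - exists n0. intros n Hn. rewrite sum_f_R0_fsum. rewrite (indR_true _ (ex_intro _ n0 H0)).
    rewrite (fsum_ext _ _ (fun i => 1 * indR (E i w))) by (intros; ring).
    rewrite (fsum_indR_one _ _ _ n0).
    + unfold Rdist. rewrite Rminus_eq_0, Rabs_R0. lra.
    + lia.
    + auto.
    + intros i _ Hi. destruct (Nat.eq_dec i n0); auto. exfalso; eapply Hd; eauto.
  - exists 0%nat. intros n _. rewrite sum_f_R0_fsum. rewrite (indR_false _ Hn).
    rewrite (fsum_ext _ _ (fun i => 1 * indR (E i w))) by (intros; ring).
    rewrite fsum_indR_none. unfold Rdist. rewrite Rminus_0_r, Rabs_R0. lra.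
    intros i _ Hi; eauto. Qed.

Lemma pmu_prob {M : TM} p (z : Sigma M) : (1 <= p)%nat -> is_prob_measure (pmu p z).
Proof. intros Hp. assert (Hpp : 0 < INR p) by (apply lt_0_INR; lia).
  split; [|split].
  - intros E _. unfold pmu. apply Rmult_le_pos. left; apply Rinv_0_lt_compat; auto.
    apply Rle_trans with (fsum p (fun _ => 0)). rewrite fsum_const; lra.
    apply fsum_le; intros; apply indR_nonneg.
  - unfold pmu. rewrite (fsum_ext _ _ (fun _ => 1)) by (intros; apply indR_true; auto).
    rewrite fsum_const. field. lra.
  - intros E HB Hd. unfold pmu. apply inf_sum_scal.
    apply inf_sum_fsum. intros k _. apply inf_sum_ind; auto. Qed.

Lemma pmu_inv {M : TM} p (z : Sigma M) : iterS p z = z -> is_invariant (pmu p z).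
Proof. intros Hz E _. unfold pmu. f_equal.
  change (fsum p (fun k => indR (E (iterS (S k) z))) = fsum p (fun k => indR (E (iterS k z)))).
  rewrite (fsum_shift p (fun k => indR (E (iterS k z)))). rewrite Hz. simpl. ring. Qed.

Lemma borel_first {M : TM} (w : nat -> Sigma M) i :
  borel M (fun x => forall j, (j < i)%nat -> x <> w j).
Proof. induction i.
  - apply borel_ext with (P := fun _ => True). split; intros; [lia|auto]. apply borel_true.
  - apply borel_ext with (P := fun x => (forall j, (j < i)%nat -> x <> w j) /\ x <> w i).
    + intros x; split.
      * intros [h1 h2] j Hj. destruct (Nat.eq_dec j i). subst; auto. apply h1; lia.
      * intros h; split; auto.
    + apply borel_and; auto. apply borel_neq. Qed.

Lemma pmu_integral_nonneg {M : TM} p (z : Sigma M) (g : Sigma M -> R) :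
  (1 <= p)%nat -> (forall x, 0 <= g x) ->
  integral_nonneg (pmu p z) g (/ INR p * fsum p (fun k => g (iterS k z))).
Proof. intros Hp Hg. assert (Hpp : 0 < INR p) by (apply lt_0_INR; lia).
  set (w := fun k => iterS k z).
  assert (Key : forall n (a : nat -> R) (E : nat -> Sigma M -> Prop),
     sum_f_R0 (fun i => a i * pmu p z (E i)) n =
     / INR p * fsum p (fun k => fsum (S n) (fun i => a i * indR (E i (w k))))).
  { intros n a E. rewrite sum_f_R0_fsum. unfold pmu.
    rewrite (fsum_ext _ _ (fun i => / INR p * (fsum p (fun k => a i * indR (E i (iterS k z)))))).
    rewrite fsum_scal. f_equal. apply fsum_exch.
    intros i _. rewrite (fsum_scal p (a i) (fun k => indR (E i (iterS k z)))). ring. }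
  split.
  - intros s [n [a [E [H1 [H2 ->]]]]]. rewrite Key.
    apply Rmult_le_compat_l. left; apply Rinv_0_lt_compat; auto.
    apply fsum_le. intros k _.
    destruct (classic (exists i, (i <= n)%nat /\ E i (w k))) as [[i0 [Hi0 HE]]|Hn].
    + rewrite (fsum_indR_one _ _ _ i0); [| lia | auto |].
      * destruct (H1 i0 Hi0) as [_ [_ h]]. apply h; auto.
      * intros i Hi HEi. destruct (Nat.eq_dec i i0); auto. exfalso.
        apply (H2 i i0 ltac:(lia) ltac:(lia) n0 (w k)); auto.
    + rewrite fsum_indR_none. apply Hg. intros i Hi HEi. apply Hn. exists i. split; auto; lia.
  - intros b Hb. apply Hb.
    exists (p - 1)%nat, (fun i => g (w i)), (fun i x => x = w i /\ forall j, (j < i)%nat -> x <> w j).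
    split; [|split].
    + intros i _. split; [|split].
      * apply borel_and. apply borel_eq. apply borel_first.
      * apply Hg.
      * intros x [-> _]. lra.
    + intros i j _ _ Hij x [Hx1 Hx2] [Hy1 Hy2]. destruct (Nat.lt_ge_cases i j).
      * apply (Hy2 i); auto.
      * apply (Hx2 j); [lia|auto].
    + rewrite Key. replace (S (p - 1)) with p by lia. f_equal. apply fsum_ext. intros k Hk.
      destruct (first_index (fun i => w i = w k) k eq_refl) as [i0 [Hi0 [Hw Hm]]].
      rewrite (fsum_indR_one _ _ _ i0).
      * rewrite Hw; auto.
      * lia.
      * split; auto. intros j Hj h. apply (Hm j Hj). congruence.
      * intros i Hi [h1 h2]. destruct (Nat.lt_total i i0) as [h|[h|h]]; auto.
        -- exfalso. apply (Hm i h). congruence.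
        -- exfalso. apply (h2 i0 h). congruence. Qed.

Lemma periodic_beta {M : TM} lam p (z : Sigma M) (A : Sigma M -> R) :
  0 < lam < 1 -> locally_holder lam A -> (1 <= p)%nat -> iterS p z = z ->
  BetaSet A (/ INR p * fsum p (fun k => A (iterS k z))).
Proof. intros Hl HA Hp Hz. exists (pmu p z). split; [apply pmu_prob; auto|]. split; [apply pmu_inv; auto|].
  split. apply meas_cont. eapply holder_cont; eauto.
  eexists; eexists; split; [|split].
  - apply pmu_integral_nonneg; auto. intros; apply Rmax_r.
  - apply pmu_integral_nonneg; auto. intros; apply Rmax_r.
  - simpl. rewrite <- Rmult_minus_distr_l, <- fsum_minus. f_equal. apply fsum_ext.
    intros. unfold Rmax. destruct Rle_dec; destruct Rle_dec; lra. Qed.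

Lemma mod_succ p j : (1 <= p)%nat ->
  ((S j mod p = S (j mod p))%nat /\ (S (j mod p) < p)%nat) \/ ((S j mod p = 0)%nat /\ S (j mod p) = p).
Proof. intros Hp. pose proof (Nat.div_mod_eq j p). pose proof (Nat.mod_upper_bound j p ltac:(lia)).
  set (r := (j mod p)%nat) in *. set (q := (j / p)%nat) in *.
  destruct (Nat.eq_dec (S r) p).
  - right. split; auto. symmetry. apply (Nat.mod_unique _ _ (S q)); lia.
  - left. split; [|lia]. symmetry. apply (Nat.mod_unique _ _ q); lia. Qed.

Lemma mod_add_p p j : (1 <= p)%nat -> ((p + j) mod p = j mod p)%nat.
Proof. intros Hp. pose proof (Nat.div_mod_eq j p). pose proof (Nat.mod_upper_bound j p ltac:(lia)).
  symmetry. apply (Nat.mod_unique _ _ (S (j / p))); lia. Qed.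

Lemma periodic_word (M : TM) (c : nat -> nat) p : (1 <= p)%nat -> c p = c 0%nat ->
  (forall j, (j < p)%nat -> M (c j) (c (S j)) = true) ->
  exists z : Sigma M, forall j, z j = c (j mod p)%nat.
Proof. intros Hp Hc Hm.
  unshelve eexists (mkSigma M (fun j => c (j mod p)%nat) _).
  - intros j. destruct (mod_succ p j Hp) as [[h1 h2]|[h1 h2]]; rewrite h1.
    + apply Hm; lia.
    + rewrite <- Hc. replace (c p) with (c (S (j mod p)%nat)) by (rewrite h2; auto). apply Hm. lia.
  - reflexivity. Qed.

Lemma Binf_all (M : TM) (x : Sigma M) j : Binf M (x j).
Proof. intros n. revert j. induction n; intros j; simpl.
  - exists (x (S j)). apply admS.
  - exists (x (S j)). split; auto. apply admS. Qed.

Lemma closing (M : TM) F K0 (y : Sigma M) m : primitive_with M F K0 -> (1 <= m)%nat ->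
  exists z : Sigma M, iterS (m + K0) z = z /\ (forall j, (j < m)%nat -> z j = y j) /\
    (forall k, (k < K0)%nat -> F (z (m + k)%nat)).
Proof. intros Hpr Hm.
  destruct (Hpr (y (m - 1)%nat) (y 0%nat) (Binf_all M y _) (Binf_all M y _)) as [l [hl0 [hl1 [hlM hlF]]]].
  set (c := fun j => if (j <? m)%nat then y j else l (j - m + 1)%nat).
  assert (Hp : (1 <= m + K0)%nat) by lia.
  destruct (periodic_word M c (m + K0) Hp) as [z Hz].
  - unfold c. destruct (Nat.ltb_spec (m + K0) m); [lia|].
    destruct (Nat.ltb_spec 0 m); [|lia]. rewrite <- hl1. f_equal. lia.
  - intros j Hj. unfold c. destruct (Nat.ltb_spec j m); destruct (Nat.ltb_spec (S j) m).
    + apply admS.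
    + replace j with (m - 1)%nat by lia. rewrite <- hl0.
      replace (S (m - 1) - m + 1)%nat with 1%nat by lia. apply hlM. lia.
    + lia.
    + replace (S j - m + 1)%nat with (S (j - m + 1)) by lia. apply hlM. lia.
  - exists z. split; [|split].
    + apply sig_ext. intros j. rewrite iterS_app, !Hz. rewrite mod_add_p; auto.
    + intros j Hj. rewrite Hz, Nat.mod_small by lia. unfold c.
      destruct (Nat.ltb_spec j m); [auto|lia].
    + intros k Hk. rewrite Hz, Nat.mod_small by lia. unfold c.
      destruct (Nat.ltb_spec (m + k) m); [lia|]. apply hlF; lia. Qed.

Lemma geom_bound lam m : 0 < lam < 1 -> fsum m (fun i => lam ^ (m - i)) <= lam / (1 - lam).
Proof. intros Hl. induction m.
  - simpl. apply Rmult_le_pos; [lra|]. left; apply Rinv_0_lt_compat; lra.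
  - rewrite (fsum_ext _ _ (fun i => lam * lam ^ (m - i))) by (intros i Hi; replace (S m - i)%nat with (S (m - i)) by lia; reflexivity).
    simpl fsum. rewrite fsum_scal. rewrite Nat.sub_diag. simpl pow.
    assert (lam * fsum m (fun i => lam ^ (m - i)) <= lam * (lam / (1 - lam))) by (apply Rmult_le_compat_l; lra).
    assert (lam * (lam / (1 - lam)) + lam * 1 = lam / (1 - lam)) by (field; lra). lra. Qed.

Lemma birk_close (M : TM) lam H (A : Sigma M -> R) : 0 < lam < 1 -> 0 < H ->
  (forall k, (1 <= k)%nat -> forall x y, agree k x y -> A x - A y <= H * lam ^ k) ->
  forall m k (y y' : Sigma M), (forall j, (j < m + k)%nat -> y j = y' j) ->
  fsum m (fun i => A (iterS i y)) - fsum m (fun i => A (iterS i y')) <= H * lam ^ k * (lam / (1 - lam)).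
Proof. intros Hl HH HA m k y y' Hyy. rewrite <- fsum_minus.
  apply Rle_trans with (fsum m (fun i => H * lam ^ k * lam ^ (m - i))).
  - apply fsum_le. intros i Hi. rewrite Rmult_assoc, <- pow_add.
    replace (k + (m - i))%nat with (m - i + k)%nat by lia.
    apply HA. lia. intros j Hj. rewrite !iterS_app. apply Hyy. lia.
  - rewrite fsum_scal. apply Rmult_le_compat_l. apply Rmult_le_pos; [lra|apply pow_le; lra].
    apply geom_bound; auto. Qed.

Definition SnA {M : TM} (A : Sigma M -> R) beta n (y : Sigma M) := fsum n (fun i => A (iterS i y) - beta).

Lemma SnA_eq {M : TM} (A : Sigma M -> R) beta n y :
  SnA A beta n y = fsum n (fun i => A (iterS i y)) - INR n * beta.
Proof. unfold SnA. rewrite fsum_minus, fsum_const. auto. Qed.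

Lemma sum_bound (M : TM) lam F K0 (A : Sigma M -> R) H c0 beta :
  0 < lam < 1 -> 0 < H -> primitive_with M F K0 ->
  (forall k, (1 <= k)%nat -> forall x y, agree k x y -> A x - A y <= H * lam ^ k) ->
  (forall x : Sigma M, F (x 0%nat) -> c0 <= A x) ->
  (forall r, BetaSet A r -> r <= beta) ->
  forall n y, SnA A beta n y <= Rmax 0 (INR K0 * (beta - c0) + H * (lam / (1 - lam))).
Proof. intros Hl HH Hpr HA Hc Hb n y. destruct n as [|n].
  { unfold SnA; simpl. apply Rmax_l. }
  apply Rle_trans with (2 := Rmax_r _ _).
  destruct (closing M F K0 y (S n) Hpr ltac:(lia)) as [z [Hz [Hzy HzF]]].
  assert (HAh : locally_holder lam A) by (exists H; split; auto).
  pose proof (Hb _ (periodic_beta lam (S n + K0) z A Hl HAh ltac:(lia) Hz)) as Hp.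
  assert (Hpp : 0 < INR (S n + K0)) by (apply lt_0_INR; lia).
  assert (Hp2 : fsum (S n + K0) (fun k => A (iterS k z)) <= INR (S n + K0) * beta).
  { apply Rmult_le_compat_l with (r := INR (S n + K0)) in Hp; [|lra].
    rewrite <- Rmult_assoc, Rinv_r, Rmult_1_l in Hp; lra. }
  rewrite fsum_add in Hp2.
  assert (Hk : INR K0 * c0 <= fsum K0 (fun k => A (iterS (S n + k) z))).
  { rewrite <- fsum_const. apply fsum_le. intros k Hk. apply Hc. rewrite iterS_app, Nat.add_0_r. apply HzF; auto. }
  pose proof (birk_close M lam H A Hl HH HA (S n) 0 y z ltac:(intros j Hj; symmetry; apply Hzy; lia)) as Hc2.
  rewrite SnA_eq. rewrite plus_INR in Hp2. simpl pow in Hc2.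
  set (L := lam / (1 - lam)) in *.
  set (a := fsum (S n) (fun i => A (iterS i y))) in *.
  set (b := fsum (S n) (fun i => A (iterS i z))) in *.
  set (d := fsum K0 (fun k => A (iterS (S n + k) z))) in *.
  nra. Qed.

Lemma splice (M : TM) (y x' : Sigma M) n : y n = x' 0%nat ->
  exists y' : Sigma M, (forall j, (j < n)%nat -> y' j = y j) /\ iterS n y' = x'.
Proof. intros Hyx.
  unshelve eexists (mkSigma M (fun j => if (j <? n)%nat then y j else x' (j - n)%nat) _).
  - intros j. cbv beta. destruct (Nat.ltb_spec j n); destruct (Nat.ltb_spec (S j) n).
    + apply admS.
    + replace j with (n - 1)%nat by lia. replace (S (n - 1) - n)%nat with 0%nat by lia.
      rewrite <- Hyx. replace n with (S (n - 1)) at 2 by lia. apply admS.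
    + lia.
    + replace (S j - n)%nat with (S (j - n)) by lia. apply admS.
  - simpl. split.
    + intros j Hj. destruct (Nat.ltb_spec j n); auto; lia.
    + apply sig_ext. intros j. rewrite iterS_app. simpl. destruct (Nat.ltb_spec (n + j) n); [lia|].
      f_equal. lia. Qed.

Theorem mainTheorem4 (M : TM) (lam : R) (F : nat -> Prop) (K0 : nat)
  (A : Sigma M -> R) :
  0 < lam < 1 ->
  primitive_with M F K0 ->
  (exists C, forall x, A x <= C) ->
  locally_holder lam A ->
  (exists c, forall x : Sigma M, F (x 0%nat) -> c <= A x) ->
  let P := fun uA : Sigma M -> R =>
    (forall x, 0 <= uA x) /\
    (exists B, forall x, Rabs (uA x) <= B) /\
    locally_holder lam uA /\
    (forall x, le_beta A (A x + uA x - uA (shift x))) /\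
    (forall u : Sigma M -> R, sub_action A u -> (forall x, 0 <= u x) ->
       forall x, uA x <= u x) in
  exists uA, P uA /\ forall v, P v -> forall x, v x = uA x.
Proof.
  intros Hl Hpr _ HAh [c0 Hc0] P.
  assert (Uniq : forall u v, P u -> P v -> forall x, v x = u x).
  { intros u v [u1 [u2 [u3 [u4 u5]]]] [v1 [v2 [v3 [v4 v5]]]] x.
    apply Rle_antisym.
    - apply v5; auto. split; auto. eapply holder_cont; eauto.
    - apply u5; auto. split; auto. eapply holder_cont; eauto. }
  assert (Zero : (forall x : Sigma M, forall t, le_beta A t) -> P (fun _ => 0)).
  { intros Ht. split; [|split; [|split; [|split]]].
    - intros; lra.
    - exists 0. intros; rewrite Rabs_R0; lra.
    - exists 1. split; [lra|]. intros k _ x y _. rewrite Rminus_0_r, Rmult_1_l. apply pow_le; lra.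
    - intros x; apply Ht; auto.
    - intros u _ Hu x; apply Hu. }
  destruct (classic ((exists b, is_upper_bound (BetaSet A) b) /\ exists x0 : Sigma M, True)) as [[[b0 Hb0] [x0 _]]|Hcase].
  2:{ assert (Z : P (fun _ => 0)).
      { apply Zero. intros x t b Hb. exfalso. apply Hcase. split; eauto. }
      exists (fun _ => 0). split; auto. intros v Hv; apply Uniq; auto. }
  destruct HAh as [H [HH HA]].
  destruct (closing M F K0 x0 1 Hpr ltac:(lia)) as [z [Hz _]].
  assert (Hne : exists r, BetaSet A r).
  { eexists. apply (periodic_beta lam (1 + K0) z A Hl ltac:(exists H; split; auto) ltac:(lia) Hz). }
  destruct (completeness (BetaSet A) ltac:(exists b0; auto) Hne) as [beta [Hbub Hblub]].
  assert (Hbeta : forall r, BetaSet A r -> r <= beta) by (intros; apply Hbub; auto).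
  assert (Hle1 : forall t, t <= beta -> le_beta A t).
  { intros t Ht b Hb. apply Hblub in Hb. lra. }
  assert (Hle2 : forall t, le_beta A t -> t <= beta) by (intros t Ht; apply Ht; auto).
  set (Kb := Rmax 0 (INR K0 * (beta - c0) + H * (lam / (1 - lam)))).
  set (Sset := fun (x : Sigma M) r => exists n y, iterS n y = x /\ r = SnA A beta n y).
  assert (Hsup : forall x, {u | is_lub (Sset x) u}).
  { intros x. apply completeness.
    - exists Kb. intros r [n [y [_ ->]]]. eapply sum_bound; eauto.
    - exists 0. exists 0%nat, x. split; auto. }
  set (uA := fun x => proj1_sig (Hsup x)).
  assert (HuA : forall x, is_lub (Sset x) (uA x)) by (intros; unfold uA; destruct (Hsup x); auto).
  assert (Hin : forall x n y, iterS n y = x -> SnA A beta n y <= uA x).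
  { intros x n y Hy. apply (HuA x). exists n, y; auto. }
  assert (Hlub : forall x b, (forall n y, iterS n y = x -> SnA A beta n y <= b) -> uA x <= b).
  { intros x b Hb. apply (HuA x). intros r [n [y [Hy ->]]]. auto. }
  assert (HL : 0 < lam / (1 - lam)) by (apply Rdiv_lt_0_compat; lra).
  assert (PuA : P uA); [|exists uA; split; auto; intros v Hv; apply Uniq; auto].
  split; [|split; [|split; [|split]]].
  - intros x. apply (Hin x 0%nat x). auto.
  - exists Kb. intros x. rewrite Rabs_right.
    + apply Hlub. intros n y _. unfold Kb. eapply sum_bound; eauto.
    + apply Rle_ge. apply (Hin x 0%nat x). auto.
  - exists (H * (lam / (1 - lam))). split; [apply Rmult_lt_0_compat; auto|].
    intros k Hk x x' Hxx.
    assert (uA x <= uA x' + H * lam ^ k * (lam / (1 - lam))); [|lra].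
    apply Hlub. intros n y Hy.
    assert (Hy0 : y n = x' 0%nat).
    { rewrite <- (Nat.add_0_r n), <- iterS_app, Hy. apply Hxx. lia. }
    destruct (splice M y x' n Hy0) as [y' [Hy1 Hy2]].
    pose proof (Hin x' n y' Hy2).
    assert (fsum n (fun i => A (iterS i y)) - fsum n (fun i => A (iterS i y')) <= H * lam ^ k * (lam / (1 - lam))).
    { apply birk_close; auto. intros j Hj. destruct (Nat.lt_ge_cases j n).
      - symmetry; auto.
      - replace j with (n + (j - n))%nat by lia. rewrite <- !iterS_app. rewrite Hy, Hy2.
        apply Hxx. lia. }
    rewrite !SnA_eq in *. lra.
  - intros x. apply Hle1.
    assert (uA x <= uA (shift x) - A x + beta); [|lra].
    apply Hlub. intros n y Hy.
    pose proof (Hin (shift x) (S n) y ltac:(simpl; rewrite Hy; auto)).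
    unfold SnA in *. simpl fsum in *. rewrite Hy in *. lra.
  - intros u [_ Hu] Hu0 x.
    assert (Hv : forall x, A x + u x - u (shift x) <= beta) by (intros; apply Hle2; auto).
    assert (Hind : forall n y, SnA A beta n y <= u (iterS n y) - u y).
    { induction n; intros y; unfold SnA in *; simpl fsum.
      - simpl. lra.
      - specialize (IHn y). specialize (Hv (iterS n y)). simpl iterS. lra. }
    apply Hlub. intros n y Hy. specialize (Hind n y). rewrite Hy in Hind. specialize (Hu0 y). lra.
Qed.
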